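(* Let $\mathbf{e}_0\in\mathbb{P}\mathrm{iez}$ with leading harmonic part $\mathbf{h}_0$ and $\mathbf{g}_0=\mathbf{e}_0-\mathbf{h}_0$. Then $$\min_{\mathbf{e}\in\overline{\Sigma}_{[\mathbb{O}^-]}}\|\mathbf{e}_0-\mathbf{e}\|^2=\|\mathbf{g}_0\|^2+\min_{\mathbf{h}\in\mathbb{H}^3(\mathbb{R}^3),\ \mathbf{d}_2'(\mathbf{h})=0}\|\mathbf{h}_0-\mathbf{h}\|^2,$$ and $\mathbf{e}$ is a minimizer of the left-hand problem if and only if $\mathbf{e}=\mathbf{h}$ with $\mathbf{h}$ a minimizer of $\|\mathbf{h}_0-\mathbf{h}\|^2$ over $\{\mathbf{h}\in\mathbb{H}^3(\mathbb{R}^3):\mathbf{d}_2'(\mathbf{h})=0\}$ (a 7-variable polynomial optimization problem).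
   Context: $\mathbb{P}\mathrm{iez}=\{\mathbf{e}\in\otimes^3\mathbb{R}^3: \mathrm{e}_{ijk}=\mathrm{e}_{ikj}\}$ with $\mathrm{O}(3)$-action $(g\cdot\mathbf{e})_{ijk}=g_{ia}g_{jb}g_{kc}\mathrm{e}_{abc}$ and norm $\|\mathbf{e}\|^2=\mathrm{e}_{ijk}\mathrm{e}_{ijk}$. $\mathbf{q}=(\delta_{ij})$. $(\mathbf{e}^s)_{ijk}=\frac13(\mathrm{e}_{ijk}+\mathrm{e}_{jik}+\mathrm{e}_{kji})$, $u_i=(\mathbf{e}^s)_{ikk}$, $(\mathbf{q}\odot\mathbf{u})_{ijk}=\frac13(\delta_{ij}u_k+\delta_{ik}u_j+\delta_{jk}u_i)$; the leading harmonic part of $\mathbf{e}$ is $\mathbf{h}=\mathbf{e}^s-\frac35\mathbf{q}\odot\mathbf{u}$. $\mathbb{H}^3(\mathbb{R}^3)$ is the 7-dimensional space of totally symmetric traceless third-order tensors. For $\mathbf{h}\in\mathbb{H}^3(\mathbb{R}^3)$: $(\mathbf{d}_2)_{ij}=h_{ikl}h_{klj}$, $\mathbf{d}_2'(\mathbf{h})=\mathbf{d}_2-\frac13\operatorname{tr}(\mathbf{d}_2)\mathbf{q}$. $\mathbb{O}^-\subset\mathrm{O}(3)$ is the group of orthogonal transformations preserving the regular tetrahedron with vertices $(1,1,1),(1,-1,-1),(-1,1,-1),(-1,-1,1)$. $\overline{\Sigma}_{[\mathbb{O}^-]}=\{\mathbf{e}\in\mathbb{P}\mathrm{iez}:\exists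 g\in\mathrm{O}(3),\ k\cdot\mathbf{e}=\mathbf{e}\ \forall k\in g\mathbb{O}^-g^{-1}\}$. *)

(* Defs.v *)
From HB Require Import structures.
From mathcomp Require Import all_boot all_order all_algebra.
From mathcomp Require Import reals.
Set Implicit Arguments. Unset Strict Implicit. Unset Printing Implicit Defensive.
Import Order.TTheory GRing.Theory Num.Theory.
Local Open Scope ring_scope.

Section Defs.
Variable R : realType.

Definition tensor3 := 'I_3 -> 'I_3 -> 'I_3 -> R.

Definition is_piez (e : tensor3) : Prop := forall i j k, e i j k = e i k j.

Definition tnorm2 (e : tensor3) : R :=
  \sum_(i < 3) \sum_(j < 3) \sum_(k < 3) (e i j k) ^+ 2.

Definition tsub (e f : tensor3) : tensor3 := fun i j k => e i j k - f i j k.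

Definition orthogonal3 (g : 'M[R]_3) : Prop := g *m g^T = 1%:M.

Definition tact (g : 'M[R]_3) (e : tensor3) : tensor3 :=
  fun i j k => \sum_(a < 3) \sum_(b < 3) \sum_(c < 3) g i a * g j b * g k c * e a b c.

(* vertices of the regular tetrahedron:
   v0 = (1,1,1), v1 = (1,-1,-1), v2 = (-1,1,-1), v3 = (-1,-1,1) *)
Definition tetra_vertex (m : 'I_4) : 'cV[R]_3 :=
  \col_(i < 3) (if (val m == 0%N) || (val m == i.+1) then 1 else -1).

(* O^- : orthogonal transformations preserving the tetrahedron (mapping its
   vertex set onto itself; surjectivity follows from injectivity of g) *)
Definition in_Ominus (g : 'M[R]_3) : Prop :=
  orthogonal3 g /\ forall m : 'I_4, exists n : 'I_4, g *m tetra_vertex m = tetra_vertex n.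

Definition in_closed_stratum_Ominus (e : tensor3) : Prop :=
  is_piez e /\
  exists g : 'M[R]_3, orthogonal3 g /\
    forall k0 : 'M[R]_3, in_Ominus k0 -> tact (g *m k0 *m invmx g) e = e.

Definition tsym (e : tensor3) : tensor3 :=
  fun i j k => (e i j k + e j i k + e k j i) / 3%:R.

Definition uvec (e : tensor3) (i : 'I_3) : R := \sum_(k < 3) tsym e i k k.

Definition kron (i j : 'I_3) : R := if i == j then 1 else 0.

Definition q_odot (u : 'I_3 -> R) : tensor3 :=
  fun i j k => (kron i j * u k + kron i k * u j + kron j k * u i) / 3%:R.

Definition harm_part (e : tensor3) : tensor3 :=
  fun i j k => tsym e i j k - 3%:R / 5%:R * q_odot (uvec e) i j k.

Definition is_harm3 (h : tensor3) : Prop :=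
  (forall i j k, h i j k = h j i k) /\ (forall i j k, h i j k = h i k j) /\
  (forall i, \sum_(k < 3) h i k k = 0).

Definition d2 (h : tensor3) (i j : 'I_3) : R :=
  \sum_(k < 3) \sum_(l < 3) h i k l * h k l j.

Definition d2dev (h : tensor3) (i j : 'I_3) : R :=
  d2 h i j - (\sum_(k < 3) d2 h k k) / 3%:R * kron i j.

Definition d2dev_zero (h : tensor3) : Prop := forall i j, d2dev h i j = 0.

Definition is_minimizer (S : tensor3 -> Prop) (x0 x : tensor3) : Prop :=
  S x /\ forall y, S y -> tnorm2 (tsub x0 x) <= tnorm2 (tsub x0 y).

End Defs.

(* Main.v *)
Require Import Defs.
From HB Require Import structures.
From mathcomp Require Import all_boot all_order all_algebra.
From mathcomp Require Import reals.
From mathcomp.algebra_tactics Require Import ring lra.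
From Stdlib Require Import FunctionalExtensionality.
From mathcomp Require Import all_classical all_reals all_analysis.
Import Order.TTheory GRing.Theory Num.Theory.
Import numFieldNormedType.Exports.
Local Open Scope ring_scope.
Set Implicit Arguments. Unset Strict Implicit. Unset Printing Implicit Defensive.

Section Main.
Variable R : realType.

Definition o0 : 'I_3 := @Ordinal 3 0 isT.
Definition o1 : 'I_3 := @Ordinal 3 1 isT.
Definition o2 : 'I_3 := @Ordinal 3 2 isT.
Lemma ord3P (i : 'I_3) : i = o0 \/ i = o1 \/ i = o2.
Proof.
case: i => [[|[|[|n]]] Hi].
- by left; apply: val_inj.
- by right; left; apply: val_inj.
- by right; right; apply: val_inj.
- by [].
Qed.
Lemma sum3 (F : 'I_3 -> R) : \sum_(i < 3) F i = F o0 + F o1 + F o2.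
Proof.
rewrite !big_ord_recr big_ord0 /= add0r.
by congr (F _ + F _ + F _); apply: val_inj.
Qed.

Implicit Types (e h : tensor3 R) (A B g : 'M[R]_3).

Lemma tensorP e h : (forall i j k, e i j k = h i j k) -> e = h.
Proof.
move=> H; apply: functional_extensionality => i; apply: functional_extensionality => j;
apply: functional_extensionality => k; exact: H.
Qed.

Definition act1 g e : tensor3 R := fun i j k => \sum_(a < 3) g i a * e a j k.
Definition act2 g e : tensor3 R := fun i j k => \sum_(b < 3) g j b * e i b k.
Definition act3 g e : tensor3 R := fun i j k => \sum_(c < 3) g k c * e i j c.

Lemma tactE g e : tact g e = act1 g (act2 g (act3 g e)).
Proof.
apply: tensorP => i j k; rewrite /tact /act1 /act2 /act3.
apply: eq_bigr => a _; rewrite mulr_sumr; apply: eq_bigr => b _.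
rewrite !mulr_sumr; apply: eq_bigr => c _; by rewrite !mulrA.
Qed.

Lemma act1_comp A B e : act1 (A *m B) e = act1 A (act1 B e).
Proof.
apply: tensorP => i j k; rewrite /act1.
under eq_bigr do rewrite mxE mulr_suml.
rewrite exchange_big; apply: eq_bigr => m _; rewrite mulr_sumr.
by apply: eq_bigr => a _; rewrite mulrA.
Qed.
Lemma act2_comp A B e : act2 (A *m B) e = act2 A (act2 B e).
Proof.
apply: tensorP => i j k; rewrite /act2.
under eq_bigr do rewrite mxE mulr_suml.
rewrite exchange_big; apply: eq_bigr => m _; rewrite mulr_sumr.
by apply: eq_bigr => a _; rewrite mulrA.
Qed.
Lemma act3_comp A B e : act3 (A *m B) e = act3 A (act3 B e).
Proof.
apply: tensorP => i j k; rewrite /act3.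
under eq_bigr do rewrite mxE mulr_suml.
rewrite exchange_big; apply: eq_bigr => m _; rewrite mulr_sumr.
by apply: eq_bigr => a _; rewrite mulrA.
Qed.

Lemma act12 A B e : act1 A (act2 B e) = act2 B (act1 A e).
Proof.
apply: tensorP => i j k; rewrite /act1 /act2.
under eq_bigr do rewrite mulr_sumr.
rewrite exchange_big; apply: eq_bigr => b _; rewrite mulr_sumr.
by apply: eq_bigr => a _; rewrite mulrCA.
Qed.
Lemma act13 A B e : act1 A (act3 B e) = act3 B (act1 A e).
Proof.
apply: tensorP => i j k; rewrite /act1 /act3.
under eq_bigr do rewrite mulr_sumr.
rewrite exchange_big; apply: eq_bigr => b _; rewrite mulr_sumr.
by apply: eq_bigr => a _; rewrite mulrCA.
Qed.
Lemma act23 A B e : act2 A (act3 B e) = act3 B (act2 A e).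
Proof.
apply: tensorP => i j k; rewrite /act2 /act3.
under eq_bigr do rewrite mulr_sumr.
rewrite exchange_big; apply: eq_bigr => b _; rewrite mulr_sumr.
by apply: eq_bigr => a _; rewrite mulrCA.
Qed.

Lemma tact_comp A B e : tact (A *m B) e = tact A (tact B e).
Proof.
rewrite !tactE act1_comp act2_comp act3_comp.
congr (act1 A _).
rewrite -act13 -act12; congr (act1 B _); congr (act2 A _).
by rewrite act23.
Qed.

Lemma kronE a b : kron R a b = (a == b)%:R.
Proof. by rewrite /kron; case: (a == b). Qed.

Lemma orth_tr g : orthogonal3 g -> g^T *m g = 1%:M.
Proof. by move=> Hg; apply: mulmx1C; exact: Hg. Qed.

Lemma orth_rows g a b : orthogonal3 g -> \sum_(k < 3) g a k * g b k = kron R a b.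
Proof.
move=> Hg; have := congr1 (fun M : 'M[R]_3 => M a b) (Hg : g *m g^T = 1%:M); rewrite !mxE kronE => <-.
by apply: eq_bigr => k _; rewrite mxE.
Qed.

Lemma orth_cols g a b : orthogonal3 g -> \sum_(k < 3) g k a * g k b = kron R a b.
Proof.
move=> /orth_tr Hg; have := congr1 (fun M : 'M[R]_3 => M a b) Hg; rewrite !mxE kronE => <-.
by apply: eq_bigr => k _; rewrite mxE.
Qed.

Lemma kron_sum (u : 'I_3 -> R) a : \sum_(b < 3) kron R a b * u b = u a.
Proof. by rewrite sum3 /kron; case: (ord3P a) => [->|[->|->]]; rewrite /=; ring. Qed.

Lemma dot_cols g (u v : 'I_3 -> R) : orthogonal3 g ->
  \sum_(k < 3) (\sum_(b < 3) g k b * u b) * (\sum_(c < 3) g k c * v c) =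
  \sum_(b < 3) u b * v b.
Proof.
move=> Hg.
have -> : \sum_(k < 3) (\sum_(b < 3) g k b * u b) * (\sum_(c < 3) g k c * v c) =
  \sum_(b < 3) u b * \sum_(c < 3) (\sum_(k < 3) g k b * g k c) * v c.
  by rewrite !sum3; ring.
by apply: eq_bigr => b _; rewrite (eq_bigr (fun c => kron R b c * v c)) ?kron_sum //
  => c _; rewrite orth_cols.
Qed.

Lemma dot_rows g (u v : 'I_3 -> R) : orthogonal3 g ->
  \sum_(k < 3) (\sum_(b < 3) g b k * u b) * (\sum_(c < 3) g c k * v c) =
  \sum_(b < 3) u b * v b.
Proof.
move=> Hg.
have -> : \sum_(k < 3) (\sum_(b < 3) g b k * u b) * (\sum_(c < 3) g c k * v c) =
  \sum_(b < 3) u b * \sum_(c < 3) (\sum_(k < 3) g b k * g c k) * v c.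
  by rewrite !sum3; ring.
by apply: eq_bigr => b _; rewrite (eq_bigr (fun c => kron R b c * v c)) ?kron_sum //
  => c _; rewrite orth_rows.
Qed.

Lemma invmx_orth g : orthogonal3 g -> invmx g = g^T.
Proof.
move=> Hg; have [gU _] := mulmx1_unit (Hg : g *m g^T = 1%:M).
by rewrite -[RHS]mul1mx -(mulVmx gU) -mulmxA (Hg : g *m g^T = 1%:M) mulmx1.
Qed.

Lemma act1_id e : act1 1%:M e = e.
Proof.
apply: tensorP => i j k; rewrite /act1.
rewrite (eq_bigr (fun a => kron R i a * e a j k)) ?kron_sum // => a _.
by rewrite mxE /kron; case: (i == a).
Qed.
Lemma act2_id e : act2 1%:M e = e.
Proof.
apply: tensorP => i j k; rewrite /act2.
rewrite (eq_bigr (fun a => kron R j a * e i a k)) ?(kron_sum (fun a => e i a k)) // => a _.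
by rewrite mxE /kron; case: (j == a).
Qed.
Lemma act3_id e : act3 1%:M e = e.
Proof.
apply: tensorP => i j k; rewrite /act3.
rewrite (eq_bigr (fun a => kron R k a * e i j a)) ?(kron_sum (fun a => e i j a)) // => a _.
by rewrite mxE /kron; case: (k == a).
Qed.
Lemma tact_id e : tact 1%:M e = e.
Proof. by rewrite tactE act3_id act2_id act1_id. Qed.

Definition scal (l : R) e : tensor3 R := fun i j k => l * e i j k.
Lemma tact_scal g l e : tact g (scal l e) = scal l (tact g e).
Proof.
apply: tensorP => i j k; rewrite /tact /scal mulr_sumr; apply: eq_bigr => a _.
rewrite mulr_sumr; apply: eq_bigr => b _; rewrite mulr_sumr; apply: eq_bigr => c _.
by rewrite mulrCA.
Qed.

Definition Bc e f (i j : 'I_3) : R := \sum_(k < 3) \sum_(l < 3) e i k l * f j k l.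

Lemma Bc_act1 A e f i j : Bc (act1 A e) (act1 A f) i j =
  \sum_(a < 3) \sum_(b < 3) A i a * A j b * Bc e f a b.
Proof. rewrite /Bc /act1 !sum3; ring. Qed.

Lemma Bc_act2 g e f i j : orthogonal3 g -> Bc (act2 g e) (act2 g f) i j = Bc e f i j.
Proof.
move=> Hg; rewrite /Bc /act2 exchange_big [RHS]exchange_big; apply: eq_bigr => l _.
exact (dot_cols (fun b => e i b l) (fun c => f j c l) Hg).
Qed.

Lemma Bc_act3 g e f i j : orthogonal3 g -> Bc (act3 g e) (act3 g f) i j = Bc e f i j.
Proof.
move=> Hg; rewrite /Bc /act3; apply: eq_bigr => k _.
exact: (dot_cols (fun b => e i k b) (fun c => f j k c) Hg).
Qed.

Lemma Bc_tact g e f i j : orthogonal3 g -> Bc (tact g e) (tact g f) i j =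
  \sum_(a < 3) \sum_(b < 3) g i a * g j b * Bc e f a b.
Proof.
move=> Hg; rewrite !tactE Bc_act1; apply: eq_bigr => a _; apply: eq_bigr => b _.
by rewrite Bc_act2 // Bc_act3.
Qed.


Lemma tact_sym12 g h : (forall i j k, h i j k = h j i k) ->
  forall i j k, tact g h i j k = tact g h j i k.
Proof.
move=> H1 i j k; rewrite /tact exchange_big; apply: eq_bigr => a _; apply: eq_bigr => b _.
apply: eq_bigr => c _; rewrite H1; ring.
Qed.

Lemma tact_sym23 g h : (forall i j k, h i j k = h i k j) ->
  forall i j k, tact g h i j k = tact g h i k j.
Proof.
move=> H2 i j k; rewrite /tact; apply: eq_bigr => a _; rewrite exchange_big.
apply: eq_bigr => b _; apply: eq_bigr => c _; rewrite H2; ring.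
Qed.

Lemma tact_trace g h i : orthogonal3 g -> (forall a, \sum_(k < 3) h a k k = 0) ->
  \sum_(k < 3) tact g h i k k = 0.
Proof.
move=> Hg H3.
have -> : \sum_(k < 3) tact g h i k k = \sum_(a < 3) g i a *
   \sum_(b < 3) \sum_(c < 3) (\sum_(k < 3) g k b * g k c) * h a b c.
  by rewrite /tact !sum3; ring.
rewrite big1 // => a _.
rewrite (eq_bigr (fun b => h a b b)) ?H3 ?mulr0 // => b _.
rewrite (eq_bigr (fun c => kron R b c * h a b c)) ?(kron_sum (fun c => h a b c)) //.
by move=> c _; rewrite orth_cols.
Qed.

Lemma harm_tact g h : orthogonal3 g -> is_harm3 h -> is_harm3 (tact g h).
Proof.
move=> Hg [H1 [H2 H3]]; split; [|split].
- exact: tact_sym12.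
- exact: tact_sym23.
- by move=> i; apply: tact_trace.
Qed.

Lemma d2_Bc h i j : is_harm3 h -> d2 h i j = Bc h h i j.
Proof.
move=> [H1 [H2 _]]; rewrite /d2 /Bc; apply: eq_bigr => k _; apply: eq_bigr => l _.
by rewrite (H2 k l j) (H1 k j l).
Qed.

Lemma d2_tact g h i j : orthogonal3 g -> is_harm3 h ->
  d2 (tact g h) i j = \sum_(a < 3) \sum_(b < 3) g i a * g j b * d2 h a b.
Proof.
move=> Hg Hh; rewrite d2_Bc; last exact: harm_tact.
rewrite Bc_tact //.
by apply: eq_bigr => a _; apply: eq_bigr => b _; rewrite d2_Bc.
Qed.

Lemma d2dev_zeroE h : d2dev_zero h <->
  forall i j, d2 h i j = (\sum_(k < 3) d2 h k k) / 3%:R * kron R i j.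
Proof.
split=> H i j; have := H i j; rewrite /d2dev.
- by move/eqP; rewrite subr_eq0 => /eqP.
- by move=> ->; rewrite subrr.
Qed.

Lemma d2dev_tact g h : orthogonal3 g -> is_harm3 h -> d2dev_zero h ->
  d2dev_zero (tact g h).
Proof.
move=> Hg Hh /d2dev_zeroE Hd.
set mu := (\sum_(k < 3) d2 h k k) / 3%:R.
have E : forall i j, d2 (tact g h) i j = mu * kron R i j.
  move=> i j; rewrite d2_tact //.
  transitivity (\sum_(a < 3) \sum_(b < 3) kron R a b * (mu * (g i a * g j b))).
    apply: eq_bigr => a _; apply: eq_bigr => b _; rewrite Hd -/mu; ring.
  rewrite (eq_bigr (fun a => mu * (g i a * g j a))); last first.
    by move=> a _; rewrite (kron_sum (fun b => mu * (g i a * g j b))).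
  by rewrite -mulr_sumr orth_rows.
have K : forall a, kron R a a = 1 by move=> a; rewrite /kron eqxx.
apply/d2dev_zeroE => i j; rewrite sum3 !E !K.
by field.
Qed.


Definition Xt : tensor3 R := fun i j k =>
  if (i != j) && (j != k) && (i != k) then 1 else 0.

Definition p0 : 'I_4 := @Ordinal 4 0 isT.
Definition p1 : 'I_4 := @Ordinal 4 1 isT.
Definition p2 : 'I_4 := @Ordinal 4 2 isT.
Definition p3 : 'I_4 := @Ordinal 4 3 isT.
Lemma ord4P (i : 'I_4) : i = p0 \/ i = p1 \/ i = p2 \/ i = p3.
Proof.
case: i => [[|[|[|[|n]]]] Hi].
- by left; apply: val_inj.
- by right; left; apply: val_inj.
- by right; right; left; apply: val_inj.
- by right; right; right; apply: val_inj.
- by [].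
Qed.
Lemma sum4 (F : 'I_4 -> R) : \sum_(i < 4) F i = F p0 + F p1 + F p2 + F p3.
Proof.
rewrite !big_ord_recr big_ord0 /= add0r.
by congr (F _ + F _ + F _ + F _); apply: val_inj.
Qed.

Definition tv (m : 'I_4) (i : 'I_3) : R := tetra_vertex R m i ord0.

Lemma X_vert i j k : Xt i j k = 4%:R^-1 * \sum_(m < 4) tv m i * tv m j * tv m k.
Proof.
rewrite sum4 /tv !mxE /Xt.
case: (ord3P i) => [->|[->|->]]; case: (ord3P j) => [->|[->|->]];
case: (ord3P k) => [->|[->|->]]; by rewrite /=; field.
Qed.

Lemma tact_X_sum g i j k : tact g Xt i j k = 4%:R^-1 * \sum_(m < 4)
  (g *m tetra_vertex R m) i ord0 * (g *m tetra_vertex R m) j ord0 *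
  (g *m tetra_vertex R m) k ord0.
Proof.
rewrite /tact.
under eq_bigr do under eq_bigr do under eq_bigr do rewrite X_vert.
rewrite !sum3 !sum4 /tv !mxE !sum3 !mxE /=.
ring.
Qed.


Lemma vertex_inj (m1 m2 : 'I_4) : tetra_vertex R m1 = tetra_vertex R m2 -> m1 = m2.
Proof.
move=> E.
have E0 := congr1 (fun M : 'cV[R]_3 => M o0 ord0) E.
have E1 := congr1 (fun M : 'cV[R]_3 => M o1 ord0) E.
have E2 := congr1 (fun M : 'cV[R]_3 => M o2 ord0) E.
rewrite /= !mxE /= in E0 E1 E2.
clear E; move: E0 E1 E2.
case: (ord4P m1) => [->|[->|[->|->]]]; case: (ord4P m2) => [->|[->|[->|->]]];
  rewrite /= => E0 E1 E2 //; exfalso; lra.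
Qed.

Lemma tact_X g : in_Ominus g -> tact g Xt = Xt.
Proof.
move=> [Hg Hv].
pose pi (m : 'I_4) := odflt m [pick n | g *m tetra_vertex R m == tetra_vertex R n].
have piP : forall m, g *m tetra_vertex R m = tetra_vertex R (pi m).
  move=> m; rewrite /pi; case: pickP => [n /eqP //|H].
  by have [n En] := Hv m; move: (H n); rewrite En eqxx.
have pi_inj : injective pi.
  move=> m1 m2 E; apply: vertex_inj.
  have : g^T *m (g *m tetra_vertex R m1) = g^T *m (g *m tetra_vertex R m2).
    by rewrite !piP E.
  by rewrite !mulmxA orth_tr // !mul1mx.
apply: tensorP => i j k; rewrite tact_X_sum X_vert; congr (_ * _).
rewrite [RHS](reindex_inj pi_inj) /=.
by apply: eq_bigr => m _; rewrite piP.
Qed.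


Definition spm (s : 'I_3 -> R) (f : 'I_3 -> 'I_3) : 'M[R]_3 :=
  \matrix_(i, a) (if a == f i then s i else 0).

Lemma spm_sum s f i (X : 'I_3 -> R) : \sum_(a < 3) spm s f i a * X a = s i * X (f i).
Proof.
rewrite sum3 !mxE; case: (ord3P (f i)) => [->|[->|->]]; rewrite /=; ring.
Qed.

Lemma tact_nested g e i j k :
  tact g e i j k = \sum_(a < 3) g i a * (\sum_(b < 3) g j b * (\sum_(c < 3) g k c * e a b c)).
Proof. by rewrite tactE. Qed.

Lemma tact_spm s f e i j k :
  tact (spm s f) e i j k = s i * s j * s k * e (f i) (f j) (f k).
Proof. rewrite tact_nested spm_sum spm_sum spm_sum; ring. Qed.

Definition sg1 (i : 'I_3) : R := if i == o0 then 1 else -1.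
Definition sg2 (i : 'I_3) : R := if i == o1 then 1 else -1.
Definition sg0 (i : 'I_3) : R := 1.
Definition cyc (i : 'I_3) : 'I_3 := if i == o0 then o1 else if i == o1 then o2 else o0.

Ltac orth_tac := apply/matrixP; let i := fresh "i" in let j := fresh "j" in move=> i j; rewrite !mxE sum3 !mxE;
  case: (ord3P i) => [->|[->|->]]; case: (ord3P j) => [->|[->|->]];
  rewrite /sg0 /sg1 /sg2 /cyc /=; ring.

Ltac vert_tac n := exists n; apply/matrixP; let i := fresh "i" in let z := fresh "z" in move=> i z; rewrite (ord1 z) !mxE sum3 !mxE;
  case: (ord3P i) => [->|[->|->]]; rewrite /sg0 /sg1 /sg2 /cyc /=; ring.

Lemma D1_O : in_Ominus (spm sg1 id).
Proof.
split; first by rewrite /orthogonal3; orth_tac.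
move=> m; case: (ord4P m) => [->|[->|[->|->]]]; [vert_tac p1|vert_tac p0|vert_tac p3|vert_tac p2].
Qed.

Lemma D2_O : in_Ominus (spm sg2 id).
Proof.
split; first by rewrite /orthogonal3; orth_tac.
move=> m; case: (ord4P m) => [->|[->|[->|->]]]; [vert_tac p2|vert_tac p3|vert_tac p0|vert_tac p1].
Qed.

Lemma P_O : in_Ominus (spm sg0 cyc).
Proof.
split; first by rewrite /orthogonal3; orth_tac.
move=> m; case: (ord4P m) => [->|[->|[->|->]]]; [vert_tac p0|vert_tac p3|vert_tac p1|vert_tac p2].
Qed.

Lemma fixed_X e : is_piez e -> (forall k0, in_Ominus k0 -> tact k0 e = e) ->
  e = scal (e o0 o1 o2) Xt.
Proof.
move=> Hp Hk.
have H1 : forall i j k, e i j k = sg1 i * sg1 j * sg1 k * e i j k.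
  move=> i j k; have := congr1 (fun t : tensor3 R => t i j k) (Hk _ D1_O).
  by rewrite tact_spm => E; exact: esym E.
have H2 : forall i j k, e i j k = sg2 i * sg2 j * sg2 k * e i j k.
  move=> i j k; have := congr1 (fun t : tensor3 R => t i j k) (Hk _ D2_O).
  by rewrite tact_spm => E; exact: esym E.
have H3 : forall i j k, e i j k = e (cyc i) (cyc j) (cyc k).
  move=> i j k; have := congr1 (fun t : tensor3 R => t i j k) (Hk _ P_O).
  by rewrite tact_spm /sg0 !mul1r => E; exact: esym E.
have Ha := H3 o0 o1 o2; have Hb := H3 o1 o2 o0.
rewrite /cyc /= in Ha Hb.
apply: tensorP => i j k; rewrite /scal /Xt.
have E1 := H1 i j k; have E2 := H2 i j k; have E3 := Hp i j k.
have E4 := Hp o2 o0 o1.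
move: E1 E2 E3; rewrite /sg1 /sg2.
case: (ord3P i) => [->|[->|->]]; case: (ord3P j) => [->|[->|->]];
case: (ord3P k) => [->|[->|->]]; rewrite /= => E1 E2 E3; lra.
Qed.

Lemma scalX_harm l : is_harm3 (scal l Xt).
Proof.
rewrite /scal /Xt; split; [|split].
- move=> i j k; case: (ord3P i) => [->|[->|->]]; case: (ord3P j) => [->|[->|->]];
  case: (ord3P k) => [->|[->|->]]; by [].
- move=> i j k; case: (ord3P i) => [->|[->|->]]; case: (ord3P j) => [->|[->|->]];
  case: (ord3P k) => [->|[->|->]]; by [].
- move=> i; rewrite sum3; case: (ord3P i) => [->|[->|->]]; rewrite /=; ring.
Qed.

Lemma scalX_d2 l : d2dev_zero (scal l Xt).
Proof.
move=> i j; rewrite /d2dev /d2 /scal /Xt /kron !sum3.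
by case: (ord3P i) => [->|[->|->]]; case: (ord3P j) => [->|[->|->]]; rewrite /=; field.
Qed.

Lemma orth_trmx g : orthogonal3 g -> orthogonal3 g^T.
Proof. by move=> Hg; rewrite /orthogonal3 trmxK orth_tr. Qed.

Lemma S_T e : in_closed_stratum_Ominus e -> is_harm3 e /\ d2dev_zero e.
Proof.
move=> [Hp [g [Hg Hk]]].
set e' := tact g^T e.
have Hk' : forall k0, in_Ominus k0 -> tact k0 e' = e'.
  move=> k0 Hk0; rewrite /e' -tact_comp -{2}(Hk k0 Hk0) -tact_comp invmx_orth //.
  by rewrite !mulmxA orth_tr // mul1mx.
have Hp' : is_piez e' by move=> i j k; apply: tact_sym23.
have E := fixed_X Hp' Hk'.
have -> : e = tact g e'.
  by rewrite /e' -tact_comp (Hg : g *m g^T = 1%:M) tact_id.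
rewrite E; split; first exact: harm_tact (scalX_harm _).
by apply: d2dev_tact => //; [exact: scalX_harm | exact: scalX_d2].
Qed.


Definition cnt (c : nat) (i j k : 'I_3) : nat :=
  ((val i == c) + (val j == c) + (val k == c))%N.

Definition mkH (q0 q1 q2 q3 q4 q5 q6 : R) : tensor3 R := fun i j k =>
  match cnt 0 i j k, cnt 1 i j k with
  | 3, _ => q0 | 2, 1 => q1 | 2, _ => q2 | 1, 2 => q3 | 1, 1 => q4
  | 1, _ => - q0 - q3 | 0, 3 => q5 | 0, 2 => q6 | 0, 1 => - q1 - q5
  | _, _ => - q2 - q6 end.

Lemma mkH_harm q0 q1 q2 q3 q4 q5 q6 : is_harm3 (mkH q0 q1 q2 q3 q4 q5 q6).
Proof.
split; [|split].
- move=> i j k; case: (ord3P i) => [->|[->|->]]; case: (ord3P j) => [->|[->|->]];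
  case: (ord3P k) => [->|[->|->]]; by [].
- move=> i j k; case: (ord3P i) => [->|[->|->]]; case: (ord3P j) => [->|[->|->]];
  case: (ord3P k) => [->|[->|->]]; by [].
- move=> i; rewrite sum3; case: (ord3P i) => [->|[->|->]]; rewrite /mkH /=; ring.
Qed.

Lemma harm_mkH (h : tensor3 R) : is_harm3 h ->
  h = mkH (h o0 o0 o0) (h o0 o0 o1) (h o0 o0 o2) (h o0 o1 o1) (h o0 o1 o2)
          (h o1 o1 o1) (h o1 o1 o2).
Proof.
move=> [H1 [H2 H3]].
have T0 := H3 o0; have T1 := H3 o1; have T2 := H3 o2.
rewrite sum3 in T0; rewrite sum3 in T1; rewrite sum3 in T2.
apply: tensorP => i j k.
case: (ord3P i) => [->|[->|->]]; case: (ord3P j) => [->|[->|->]];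
case: (ord3P k) => [->|[->|->]]; rewrite /mkH /=;
repeat rewrite ?(H1 o1 o0) ?(H1 o2 o0) ?(H1 o2 o1) ?(H2 _ o1 o0) ?(H2 _ o2 o0) ?(H2 _ o2 o1) in T0 T1 T2 *;
lra.
Qed.

Definition tdot e h := \sum_(i < 3) \sum_(j < 3) \sum_(k < 3) e i j k * h i j k.

Lemma tnorm2_split a b c :
  tnorm2 (tsub a c) = tnorm2 (tsub a b) + tnorm2 (tsub b c) + 2%:R * tdot (tsub a b) (tsub b c).
Proof.
rewrite /tnorm2 /tdot /tsub mulr_sumr -!big_split; apply: eq_bigr => i _ /=.
rewrite mulr_sumr -!big_split; apply: eq_bigr => j _ /=.
rewrite mulr_sumr -!big_split; apply: eq_bigr => k _ /=.
ring.
Qed.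

Lemma harm_part_harm e : is_piez e -> is_harm3 (harm_part e).
Proof.
move=> Hp; rewrite /harm_part /tsym /uvec /q_odot /kron /tsym; split; [|split].
- move=> i j k; rewrite !sum3.
  by case: (ord3P i) => [->|[->|->]]; case: (ord3P j) => [->|[->|->]];
  case: (ord3P k) => [->|[->|->]]; rewrite /=;
  rewrite ?(Hp _ o1 o0) ?(Hp _ o2 o0) ?(Hp _ o2 o1); field.
- move=> i j k; rewrite !sum3.
  by case: (ord3P i) => [->|[->|->]]; case: (ord3P j) => [->|[->|->]];
  case: (ord3P k) => [->|[->|->]]; rewrite /=;
  rewrite ?(Hp _ o1 o0) ?(Hp _ o2 o0) ?(Hp _ o2 o1); field.
- move=> i; rewrite !sum3.
  by case: (ord3P i) => [->|[->|->]]; rewrite /=;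
  rewrite ?(Hp _ o1 o0) ?(Hp _ o2 o0) ?(Hp _ o2 o1); field.
Qed.

Lemma harm_part_orth e k : is_piez e -> is_harm3 k -> tdot (tsub e (harm_part e)) k = 0.
Proof.
move=> Hp /harm_mkH ->.
rewrite /tdot /tsub /harm_part /tsym /uvec /q_odot /kron !sum3 /mkH /=.
rewrite ?(Hp _ o1 o0) ?(Hp _ o2 o0) ?(Hp _ o2 o1).
by field.
Qed.


Implicit Types (x y z w n u : 'I_3 -> R).

Definition tri h x y z := \sum_(i < 3) \sum_(j < 3) \sum_(k < 3) h i j k * x i * y j * z k.
Definition pp h x := tri h x x x.
Definition sq x := \sum_(i < 3) x i ^+ 2.
Definition dot x y := \sum_(i < 3) x i * y i.
Definition vadd x t w : 'I_3 -> R := fun i => x i + t * w i.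
Definition vscale s x : 'I_3 -> R := fun i => s * x i.
Definition row3 g (i : 'I_3) : 'I_3 -> R := fun a => g i a.

Lemma tact_tri g h i j k : tact g h i j k = tri h (row3 g i) (row3 g j) (row3 g k).
Proof.
rewrite /tact /tri /row3; apply: eq_bigr => a _; apply: eq_bigr => b _.
apply: eq_bigr => c _; ring.
Qed.

Lemma pp_expand h x t w : is_harm3 h ->
  pp h (vadd x t w) = pp h x + 3%:R * t * tri h x x w + 3%:R * t ^+ 2 * tri h x w w
    + t ^+ 3 * pp h w.
Proof.
move=> /harm_mkH ->; rewrite /pp /tri /vadd !sum3 /mkH /=; ring.
Qed.

Lemma pp_scale h s x : pp h (vscale s x) = s ^+ 3 * pp h x.
Proof. rewrite /pp /tri /vscale !sum3; ring. Qed.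

Lemma sq_vadd x t w : dot x w = 0 -> sq (vadd x t w) = sq x + t ^+ 2 * sq w.
Proof. rewrite /dot /sq /vadd !sum3 => H; rewrite -[RHS]addr0 -(mulr0 (2%:R * t)) -H; ring. Qed.

Lemma sq_vscale s x : sq (vscale s x) = s ^+ 2 * sq x.
Proof. rewrite /sq /vscale !sum3; ring. Qed.

Lemma sq_ge0 x : 0 <= sq x.
Proof. by rewrite /sq sumr_ge0 // => i _; rewrite sqr_ge0. Qed.

Lemma mono_bound (c t : R) (k : nat) : `|t| <= 1 -> c * t ^+ k <= `|c|.
Proof.
move=> Ht; apply: le_trans (ler_norm _) _.
rewrite normrM normrX -[X in _ <= X]mulr1 ler_wpM2l //.
by rewrite exprn_ile1.
Qed.

Lemma lin_small (s K : R) : (forall t, 0 < t -> t <= 1 -> s * t <= K * t ^+ 2) -> s <= 0.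
Proof.
move=> H; rewrite leNgt; apply/negP => s0.
have K0 : 0 <= K.
  have := H 1 ltr01 (lexx _); rewrite expr1n !mulr1 => sK; lra.
pose t := s / (s + K).
have t0 : 0 < t by rewrite /t divr_gt0 // ltr_wpDr.
have t1 : t <= 1 by rewrite /t ler_pdivrMr ?ltr_wpDr // mul1r lerDl.
have E : t * (s + K) = s by rewrite /t divfK // gt_eqF // ltr_wpDr.
have := H t t0 t1; clearbody t.
have ts : 0 < t * s by rewrite mulr_gt0.
rewrite expr2 mulrA ler_pM2r // => Hst.
rewrite mulrDr in E; lra.
Qed.

Lemma lagr1 (M a b c W : R) : 0 <= W ->
  (forall t, (M + 3%:R * t * a + 3%:R * t ^+ 2 * b + t ^+ 3 * c) ^+ 2 <=
             M ^+ 2 * (1 + t ^+ 2 * W) ^+ 3) -> M * a = 0.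
Proof.
move=> W0 H.
pose c0 := 3%:R * M ^+ 2 * W - 9%:R * a ^+ 2 - 6%:R * M * b.
pose c1 := - (2%:R * M * c + 18%:R * a * b).
pose c2 := 3%:R * M ^+ 2 * W ^+ 2 - 9%:R * b ^+ 2 - 6%:R * a * c.
pose c3 := - (6%:R * b * c).
pose c4 := M ^+ 2 * W ^+ 3 - c ^+ 2.
pose K := `|c0| + `|c1| + `|c2| + `|c3| + `|c4|.
have key : forall t, `|t| <= 1 -> 6%:R * M * a * t <= K * t ^+ 2.
  move=> t Ht; have := H t.
  have E : M ^+ 2 * (1 + t ^+ 2 * W) ^+ 3 - (M + 3%:R * t * a + 3%:R * t ^+ 2 * b + t ^+ 3 * c) ^+ 2
     = - (6%:R * M * a * t) + t ^+ 2 * (c0 + c1 * t + c2 * t ^+ 2 + c3 * t ^+ 3 + c4 * t ^+ 4).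
    by rewrite /c0 /c1 /c2 /c3 /c4; ring.
  have B : c0 + c1 * t + c2 * t ^+ 2 + c3 * t ^+ 3 + c4 * t ^+ 4 <= K.
    rewrite /K; have := mono_bound c0 0 Ht; have := mono_bound c1 1 Ht;
    have := mono_bound c2 2 Ht; have := mono_bound c3 3 Ht; have := mono_bound c4 4 Ht.
    rewrite expr0 expr1 mulr1; lra.
  have t2 : 0 <= t ^+ 2 by rewrite sqr_ge0.
  move=> Ht'; rewrite -subr_ge0 E in Ht'.
  have : t ^+ 2 * (c0 + c1 * t + c2 * t ^+ 2 + c3 * t ^+ 3 + c4 * t ^+ 4) <= t ^+ 2 * K.
    by rewrite ler_wpM2l.
  nra.
have P1 : 6%:R * M * a <= 0.
  apply: (lin_small (K := K)) => t t0 t1; apply: key.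
  by rewrite ger0_norm // ltW.
have P2 : - (6%:R * M * a) <= 0.
  apply: (lin_small (K := K)) => t t0 t1.
  have := key (- t); rewrite normrN ger0_norm ?(ltW t0) // => /(_ t1).
  rewrite sqrrN; lra.
nra.
Qed.


Lemma lagr_max h n w (K : ('I_3 -> R) -> Prop) :
  is_harm3 h -> sq n = 1 -> dot n w = 0 ->
  (forall u, K u -> pp h u ^+ 2 <= pp h n ^+ 2) ->
  (forall t, K (vscale (Num.sqrt (sq (vadd n t w)))^-1 (vadd n t w))) ->
  pp h n * tri h n n w = 0.
Proof.
move=> Hh Hn Hw HM HK.
apply: (@lagr1 _ _ (tri h n w w) (pp h w) (sq w)); first exact: sq_ge0.
move=> t; rewrite -pp_expand //.
set x := vadd n t w.
have Hs : sq x = 1 + t ^+ 2 * sq w by rewrite /x sq_vadd // Hn.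
have s0 : 0 < sq x by rewrite Hs; have := sq_ge0 w; have := sqr_ge0 t; nra.
set r := Num.sqrt (sq x).
have r0 : 0 < r by rewrite /r sqrtr_gt0.
have r2 : r ^+ 2 = sq x by rewrite /r sqr_sqrtr // ltW.
have Hu := HM _ (HK t); rewrite pp_scale -/x -/r in Hu.
have -> : pp h x ^+ 2 = (r ^+ 2) ^+ 3 * (r^-1 ^+ 3 * pp h x) ^+ 2.
  by field; rewrite gt_eqF.
rewrite r2 -Hs mulrC ler_wpM2r //; first by rewrite exprn_ge0 // ltW.
Qed.

Lemma orth_mul A B : orthogonal3 A -> orthogonal3 B -> orthogonal3 (A *m B).
Proof.
move=> HA HB; rewrite /orthogonal3 trmx_mul mulmxA -(mulmxA A) HB mulmx1; exact: HA.
Qed.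

Lemma compose h G1 : orthogonal3 G1 ->
  (exists G l, orthogonal3 G /\ tact G1 h = tact G (scal l Xt)) ->
  exists G l, orthogonal3 G /\ h = tact G (scal l Xt).
Proof.
move=> H1 [G [l [HG E]]]; exists (G1^T *m G), l; split.
  by apply: orth_mul => //; apply: orth_trmx.
by rewrite tact_comp -E -tact_comp orth_tr // tact_id.
Qed.

Definition v3 (a b c : R) : 'I_3 -> R := fun i => if i == o0 then a else if i == o1 then b else c.

Lemma householder n : sq n = 1 -> exists G, orthogonal3 G /\ forall j, G o2 j = n j.
Proof.
move=> Hn.
have Hn' : n o0 ^+ 2 + n o1 ^+ 2 + n o2 ^+ 2 = 1 by rewrite -Hn /sq sum3.
case: (n o2 =P 1) => [n21|n21].
  have n0 : n o0 = 0 by nra.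
  have n1 : n o1 = 0 by nra.
  exists 1%:M; split; first by rewrite /orthogonal3 trmx1 mulmx1.
  move=> j; rewrite mxE; case: (ord3P j) => [->|[->|->]] /=; by rewrite ?n0 ?n1 ?n21.
pose w := fun i => kron R o2 i - n i.
pose D := sq w.
have D2 : D = 2%:R * (1 - n o2) by rewrite /D /sq sum3 /w /kron /=; nra.
have D0 : D != 0 by rewrite D2; apply/eqP => E; apply: n21; lra.
exists (\matrix_(i, j) (kron R i j - 2%:R * w i * w j / D)); split.
  apply/matrixP => i j; rewrite !mxE sum3 !mxE.
  move: D0; rewrite /D /sq sum3 => D0.
  case: (ord3P i) => [->|[->|->]]; case: (ord3P j) => [->|[->|->]]; rewrite /kron /=;
    by field.
move=> j; rewrite mxE D2 /w /kron.
have n2' : 1 - n o2 != 0 by apply/eqP => E; apply: n21; lra.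
by case: (ord3P j) => [->|[->|->]]; rewrite /=; field.
Qed.


Definition Rz (a b : R) : 'M[R]_3 :=
  \matrix_(i, j) ((if i == o0 then v3 a (- b) 0 else if i == o1 then v3 b a 0 else v3 0 0 1) j).

Lemma Rz_orth a b : a ^+ 2 + b ^+ 2 = 1 -> orthogonal3 (Rz a b).
Proof.
move=> H; apply/matrixP => i j; rewrite !mxE sum3 !mxE.
case: (ord3P i) => [->|[->|->]]; case: (ord3P j) => [->|[->|->]]; rewrite /v3 /=; lra.
Qed.

Lemma tact_Rz a b l : tact (Rz a b) (scal l Xt) =
  mkH 0 0 (- (2%:R * l * a * b)) 0 (l * (a ^+ 2 - b ^+ 2)) 0 (2%:R * l * a * b).
Proof.
apply: tensorP => i j k; rewrite /tact !sum3 !mxE /scal /Xt /v3.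
case: (ord3P i) => [->|[->|->]]; case: (ord3P j) => [->|[->|->]];
case: (ord3P k) => [->|[->|->]]; rewrite /mkH /=; ring.
Qed.

Definition NF (c d ee gg ii : R) := mkH (- d) (- gg) c d ee gg ii.

Lemma hNF h : is_harm3 h -> h o0 o2 o2 = 0 -> h o1 o2 o2 = 0 ->
  h = NF (h o0 o0 o2) (h o0 o1 o1) (h o0 o1 o2) (h o1 o1 o1) (h o1 o1 o2).
Proof.
move=> Hh H1 H2; rewrite {1}(harm_mkH Hh) /NF.
rewrite (harm_mkH Hh) /mkH /= in H1 H2.
congr mkH; lra.
Qed.

Lemma NF_eqs c d ee gg ii : d2dev_zero (NF c d ee gg ii) ->
  [/\ c ^+ 2 = ii ^+ 2, ee * (c + ii) = 0, d ^+ 2 + gg ^+ 2 = c * ii + ii ^+ 2,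
      d * (ii - c) = 2%:R * ee * gg & gg * (ii - c) = - (2%:R * d * ee)].
Proof.
move=> /d2dev_zeroE H.
have E00 := H o0 o0; have E11 := H o1 o1; have E22 := H o2 o2.
have E01 := H o0 o1; have E02 := H o0 o2; have E12 := H o1 o2.
move: E00 E11 E22 E01 E02 E12; rewrite /d2 /kron !sum3 /NF /mkH /= => E00 E11 E22 E01 E02 E12.
split; nra.
Qed.


Lemma half_angle (c ee : R) : exists a b l, [/\ a ^+ 2 + b ^+ 2 = 1,
  c = - (2%:R * l * a * b) & ee = l * (a ^+ 2 - b ^+ 2)].
Proof.
have s0 : 0 <= c ^+ 2 + ee ^+ 2 by rewrite addr_ge0 ?sqr_ge0.
set r := Num.sqrt (c ^+ 2 + ee ^+ 2).
have r2 : r ^+ 2 = c ^+ 2 + ee ^+ 2 by rewrite /r sqr_sqrtr.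
have r0 : 0 <= r by rewrite /r sqrtr_ge0.
clearbody r.
case: (r =P 0) => [rz|rnz].
  have c0 : c = 0 by move: r2; rewrite rz; nra.
  have e0 : ee = 0 by move: r2; rewrite rz; nra.
  by exists 1, 0, 0; split; rewrite ?c0 ?e0; ring.
have rp : 0 < r by rewrite lt_def r0 andbT; apply/eqP.
case: (ee + r =P 0) => [er|ner].
  have c0 : c = 0 by nra.
  exists 0, 1, r; split; rewrite ?c0; try ring.
  lra.
have erp : 0 < ee + r.
  rewrite lt_def; apply/andP; split; first by apply/eqP.
  nra.
have q0 : 0 < (r + ee) / (2%:R * r) by rewrite divr_gt0 // ?mulr_gt0 // addrC.
set a := Num.sqrt ((r + ee) / (2%:R * r)).
have a2 : a ^+ 2 = (r + ee) / (2%:R * r) by rewrite /a sqr_sqrtr // ltW.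
have ap : 0 < a by rewrite /a sqrtr_gt0.
clearbody a.
have cE : c ^+ 2 = r ^+ 2 - ee ^+ 2 by lra.
have rn : r != 0 by rewrite gt_eqF.
have an : a != 0 by rewrite gt_eqF.
have ern : r + ee != 0 by rewrite addrC gt_eqF.
exists a, (- c / (2%:R * r * a)), r.
have b2 : (- c / (2%:R * r * a)) ^+ 2 = c ^+ 2 / (4%:R * r ^+ 2 * a ^+ 2).
  by field; rewrite an rn.
rewrite b2 a2 cE; split.
- by field; rewrite ?rn ?ern.
- by field; rewrite ?an ?rn.
- by field; rewrite ?rn ?ern.
Qed.

Lemma caseA_sol h : is_harm3 h -> d2dev_zero h ->
  h o0 o2 o2 = 0 -> h o1 o2 o2 = 0 -> h o2 o2 o2 = 0 ->
  exists G l, orthogonal3 G /\ h = tact G (scal l Xt).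
Proof.
move=> Hh Hd H1 H2 H3.
have E := hNF Hh H1 H2.
move: Hd H3; rewrite E.
set c := h o0 o0 o2; set d := h o0 o1 o1; set ee := h o0 o1 o2.
set gg := h o1 o1 o1; set ii := h o1 o1 o2.
move=> /NF_eqs [Q1 Q2 Q3 Q4 Q5] H3; rewrite /NF /mkH /= in H3.
have iE : ii = - c by lra.
have d0 : d = 0 by nra.
have g0 : gg = 0 by nra.
have [a [b [l [Hab Hc He]]]] := half_angle c ee.
exists (Rz a b), l; split; first exact: Rz_orth.
rewrite tact_Rz /NF iE d0 g0 oppr0 -Hc -He.
congr mkH; lra.
Qed.


Definition vv h n (k : 'I_3) := \sum_(i < 3) \sum_(j < 3) h i j k * n i * n j.

Lemma tri_vv h n z : tri h n n z = \sum_(k < 3) vv h n k * z k.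
Proof. rewrite /tri /vv !sum3; ring. Qed.

Lemma tact_22k (G : 'M[R]_3) h n k : (forall j, G o2 j = n j) ->
  tact G h o2 o2 k = tri h n n (row3 G k).
Proof.
move=> Hr; rewrite tact_tri; congr tri; apply: functional_extensionality => j; exact: Hr.
Qed.

Lemma axis_sol h n : is_harm3 h -> d2dev_zero h -> sq n = 1 ->
  (forall k, vv h n k = 0) ->
  exists G l, orthogonal3 G /\ h = tact G (scal l Xt).
Proof.
move=> Hh Hd Hn Hv.
have [G1 [HG1 Hr]] := householder Hn.
apply: (compose HG1).
have Hh1 := harm_tact HG1 Hh.
have [S1 [S2 _]] := Hh1.
have Z : forall k, tact G1 h o2 o2 k = 0.
  by move=> k; rewrite (tact_22k _ _ Hr) tri_vv big1 // => j _; rewrite Hv mul0r.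
apply: caseA_sol => //.
- exact: d2dev_tact.
- by rewrite S1 S2 Z.
- by rewrite S1 S2 Z.
Qed.

Lemma caseB_axis c d : c != 0 -> d ^+ 2 = 2%:R * c ^+ 2 ->
  exists n, sq n = 1 /\ forall k, vv (NF c d 0 0 c) n k = 0.
Proof.
move=> c0 Hd.
have q0 : 0 <= 2%:R / 3%:R :> R by rewrite divr_ge0 // ler0n.
set x := Num.sqrt (2%:R / 3%:R : R).
have x2 : x ^+ 2 = 2%:R / 3%:R by rewrite /x sqr_sqrtr.
clearbody x.
set z := d * x / (2%:R * c).
have z2 : z ^+ 2 = x ^+ 2 / 2%:R.
  by rewrite /z expr_div_n !exprMn Hd; field.
exists (v3 x 0 z); split.
  rewrite /sq sum3 /v3 /=.
  have -> : (0 : R) ^+ 2 = 0 by rewrite expr2 mulr0.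
  by rewrite z2 x2; field.
move=> k.
have V : vv (NF c d 0 0 c) (v3 x 0 z) k =
  if k == o0 then 2%:R * c * x * z - d * x ^+ 2 else if k == o1 then 0
  else c * x ^+ 2 - 2%:R * c * z ^+ 2.
  by rewrite /vv !sum3 /NF /mkH /v3; case: (ord3P k) => [->|[->|->]]; rewrite /=; ring.
rewrite V; case: (ord3P k) => [->|[->|->]] /=.
- by rewrite /z; field.
- by [].
- by rewrite z2; field.
Qed.


Definition CMax h := exists a b, a ^+ 2 + b ^+ 2 = 1 /\ forall a' b', a' ^+ 2 + b' ^+ 2 = 1 ->
  pp h (v3 a' b' 0) ^+ 2 <= pp h (v3 a b 0) ^+ 2.
Definition SMax h := exists n, sq n = 1 /\ forall u, sq u = 1 -> pp h u ^+ 2 <= pp h n ^+ 2.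

Lemma normalize_sq x : 0 < sq x -> sq (vscale (Num.sqrt (sq x))^-1 x) = 1.
Proof.
move=> s0; rewrite sq_vscale exprVn sqr_sqrtr ?ltW // mulVf //; by rewrite gt_eqF.
Qed.

Lemma v3E (v : 'I_3 -> R) : v = v3 (v o0) (v o1) (v o2).
Proof.
by apply: functional_extensionality => i; rewrite /v3; case: (ord3P i) => [->|[->|->]].
Qed.

Lemma sq_v3 a b c : sq (v3 a b c) = a ^+ 2 + b ^+ 2 + c ^+ 2.
Proof. by rewrite /sq sum3 /v3. Qed.

Lemma lag_sol h : (forall h', CMax h') -> is_harm3 h -> d2dev_zero h ->
  h o0 o2 o2 = 0 -> h o1 o2 o2 = 0 ->
  exists G l, orthogonal3 G /\ h = tact G (scal l Xt).
Proof.
move=> CM Hh Hd H1 H2.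
have [c [d [ee [gg [ii E]]]]] : exists c d ee gg ii, h = NF c d ee gg ii.
  by do 5 eexists; exact: hNF Hh H1 H2.
have HdN : d2dev_zero (NF c d ee gg ii) by rewrite -E.
have [Q1 Q2 Q3 Q4 Q5] := NF_eqs HdN.
case: (c + ii =P 0) => [ci|nci].
  apply: caseA_sol => //; rewrite E /NF /mkH /=; lra.
have cnz : c + ii != 0 by apply/eqP.
have iE : ii = c.
  have : (c - ii) * (c + ii) = 0 by rewrite -subr_sqr Q1 subrr.
  by move/eqP; rewrite mulf_eq0 (negbTE cnz) orbF subr_eq0 => /eqP.
have e0 : ee = 0 by move/eqP: Q2; rewrite mulf_eq0 (negbTE cnz) orbF => /eqP.
have Qd : d ^+ 2 + gg ^+ 2 = 2%:R * c ^+ 2 by rewrite Q3 iE; ring.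
have c0 : c != 0 by apply/eqP => c0; apply: nci; rewrite iE c0 addr0.
have [a [b [Hab Hmax]]] := CM h.
set u := v3 a b 0; set w := v3 (- b) a 0.
have Hu : sq u = 1 by rewrite /u sq_v3 Hab expr2 mulr0 addr0.
have Huw : dot u w = 0 by rewrite /dot sum3 /u /w /v3 /=; ring.
have L := @lagr_max h u w (fun v => v o2 = 0 /\ v o0 ^+ 2 + v o1 ^+ 2 = 1) Hh Hu Huw.
have L2 : pp h u * tri h u u w = 0.
  apply: L.
    move=> v [v2 v01]; rewrite (v3E v) v2; exact: Hmax.
  move=> t; set x := vadd u t w.
  have sx : sq x = 1 + t ^+ 2 * sq w by rewrite /x sq_vadd // Hu.
  have s0 : 0 < sq x by rewrite sx; have := sq_ge0 w; have := sqr_ge0 t; nra.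
  have := normalize_sq s0; rewrite /vscale /x /vadd /u /w /v3 /sq sum3 /= !mulr0 addr0 mulr0.
  by split => //; lra.
have Mnz : pp h u != 0.
  apply/eqP => M0.
  have A1 := Hmax 1 0; have A2 := Hmax 0 1.
  rewrite M0 in A1 A2.
  have P1 : pp h (v3 1 0 0) = - d by rewrite E /pp /tri !sum3 /NF /mkH /v3 /=; ring.
  have P2 : pp h (v3 0 1 0) = gg by rewrite E /pp /tri !sum3 /NF /mkH /v3 /=; ring.
  have : (1 : R) ^+ 2 + 0 ^+ 2 = 1 by rewrite expr1n expr2 mulr0 addr0.
  have : (0 : R) ^+ 2 + 1 ^+ 2 = 1 by rewrite expr1n expr2 mulr0 add0r.
  move=> /A2 B2 /A1 B1; rewrite P1 P2 in B1 B2.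
  have cz : c = 0 by nra.
  by rewrite cz eqxx in c0.
have Tuw : tri h u u w = 0 by move/eqP: L2; rewrite mulf_eq0 (negbTE Mnz) /= => /eqP.
have Hab' : a ^+ 2 + (- b) ^+ 2 = 1 by rewrite sqrrN.
have HG2 := Rz_orth Hab'.
apply: (compose HG2).
set h2 := tact (Rz a (- b)) h.
have Hh2 : is_harm3 h2 := harm_tact HG2 Hh.
have Hd2 : d2dev_zero h2 := d2dev_tact HG2 Hh Hd.
have [S1 [S2 _]] := Hh2.
have Z0 : h2 o0 o2 o2 = 0.
  rewrite /h2 E e0 iE /tact !sum3 !mxE /v3 /NF /mkH /=; ring.
have Z1 : h2 o1 o2 o2 = 0.
  rewrite /h2 E e0 iE /tact !sum3 !mxE /v3 /NF /mkH /=; ring.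
have Z2 : h2 o0 o0 o1 = 0.
  rewrite /h2 tact_tri -Tuw; congr tri; apply: functional_extensionality => j;
  rewrite /row3 mxE /u /w /v3; case: (ord3P j) => [->|[->|->]] /=; by rewrite ?opprK.
have [c2 [d2 [e2 [g2 [i2 E2]]]]] : exists c d ee gg ii, h2 = NF c d ee gg ii.
  by do 5 eexists; exact: hNF Hh2 Z0 Z1.
have HdN2 : d2dev_zero (NF c2 d2 e2 g2 i2) by rewrite -E2.
have g20 : g2 = 0.
  by move: Z2; rewrite E2 /NF /mkH /= => /eqP; rewrite oppr_eq0 => /eqP.
have [R1 R2 R3 R4 R5] := NF_eqs HdN2.
case: (c2 + i2 =P 0) => [ci2|nci2].
  apply: caseA_sol => //; rewrite E2 /NF /mkH /=; lra.
have cnz2 : c2 + i2 != 0 by apply/eqP.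
have iE2 : i2 = c2.
  have : (c2 - i2) * (c2 + i2) = 0 by rewrite -subr_sqr R1 subrr.
  by move/eqP; rewrite mulf_eq0 (negbTE cnz2) orbF subr_eq0 => /eqP.
have e20 : e2 = 0 by move/eqP: R2; rewrite mulf_eq0 (negbTE cnz2) orbF => /eqP.
have Qd2 : d2 ^+ 2 = 2%:R * c2 ^+ 2.
  by rewrite g20 iE2 in R3; nra.
have c20 : c2 != 0 by apply/eqP => c0'; apply: nci2; rewrite iE2 c0' addr0.
have [n [Hn Hv]] := caseB_axis c20 Qd2.
apply: (axis_sol Hh2 Hd2 Hn).
by rewrite E2 e20 g20 iE2.
Qed.


Lemma pp_zero h : is_harm3 h -> (forall x, pp h x = 0) -> h = mkH 0 0 0 0 0 0 0.
Proof.
move=> Hh Hp; rewrite (harm_mkH Hh).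
set q0 := h o0 o0 o0; set q1 := h o0 o0 o1; set q2 := h o0 o0 o2; set q3 := h o0 o1 o1.
set q4 := h o0 o1 o2; set q5 := h o1 o1 o1; set q6 := h o1 o1 o2.
have P : forall a b c, pp (mkH q0 q1 q2 q3 q4 q5 q6) (v3 a b c) = 0.
  by move=> a b c; rewrite -(harm_mkH Hh) Hp.
have A1 := P 1 0 0; have A2 := P 0 1 0; have A3 := P 0 0 1.
have A4 := P 1 1 0; have A5 := P 1 (-1) 0; have A6 := P 1 0 1; have A7 := P 1 0 (-1).
have A8 := P 0 1 1; have A9 := P 0 1 (-1); have A10 := P 1 1 1.
move: A1 A2 A3 A4 A5 A6 A7 A8 A9 A10; rewrite /pp /tri !sum3 /mkH /v3 /=.
move=> A1 A2 A3 A4 A5 A6 A7 A8 A9 A10.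
congr mkH; lra.
Qed.

Lemma mkH0 : mkH 0 0 0 0 0 0 0 = tact 1%:M (scal 0 Xt).
Proof.
rewrite tact_id; apply: tensorP => i j k; rewrite /scal mul0r.
case: (ord3P i) => [->|[->|->]]; case: (ord3P j) => [->|[->|->]];
case: (ord3P k) => [->|[->|->]]; rewrite /mkH /=; ring.
Qed.

Lemma T_S h : (forall h', SMax h') -> (forall h', CMax h') ->
  is_harm3 h -> d2dev_zero h -> in_closed_stratum_Ominus h.
Proof.
move=> SM CM Hh Hd.
have [G [l [HG E]]] : exists G l, orthogonal3 G /\ h = tact G (scal l Xt).
  have [n [Hn Hmax]] := SM h.
  case: (pp h n =P 0) => [M0|M0].
    exists 1%:M, 0; split; first by rewrite /orthogonal3 trmx1 mulmx1.
    rewrite -mkH0; apply: pp_zero => // x.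
    have [sx0|sxp] : sq x = 0 \/ 0 < sq x.
      by have := sq_ge0 x; rewrite le_eqVlt => /orP [/eqP <-|->]; [left|right].
      have : forall i, x i = 0.
        move: sx0; rewrite /sq sum3 => sx0 i.
        have : x i ^+ 2 = 0.
          case: (ord3P i) => [->|[->|->]]; have := sqr_ge0 (x o0);
          have := sqr_ge0 (x o1); have := sqr_ge0 (x o2); lra.
        by move/eqP; rewrite sqrf_eq0 => /eqP.
      move=> x0; rewrite /pp /tri big1 // => i _; rewrite big1 // => j _; rewrite big1 // => k _.
      by rewrite !x0 !mulr0.
    have := Hmax _ (normalize_sq sxp); rewrite M0 (_ : (0:R) ^+ 2 = 0) ?expr2 ?mulr0 // pp_scale.
    set r := Num.sqrt (sq x).
    have rp : 0 < r by rewrite /r sqrtr_gt0.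
    move=> H; have : (r^-1 ^+ 3 * pp h x) ^+ 2 = 0.
      by apply/eqP; rewrite eq_le H sqr_ge0.
    move/eqP; rewrite sqrf_eq0 mulf_eq0 expf_eq0 /= invr_eq0 (gt_eqF rp) /=.
    by move/eqP.
  have Hl : forall w, dot n w = 0 -> tri h n n w = 0.
    move=> w Hw.
    have := @lagr_max h n w (fun u => sq u = 1) Hh Hn Hw Hmax.
    have HK : forall t, sq (vscale (Num.sqrt (sq (vadd n t w)))^-1 (vadd n t w)) = 1.
      move=> t; apply: normalize_sq; rewrite sq_vadd // Hn.
      by have := sq_ge0 w; have := sqr_ge0 t; nra.
    move/(_ HK)/eqP; rewrite mulf_eq0 => /orP [/eqP M|/eqP //]; by [].
  have [G1 [HG1 Hr]] := householder Hn.
  apply: (compose HG1).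
  have Hh1 := harm_tact HG1 Hh.
  have [S1 [S2 _]] := Hh1.
  have Z : forall k, k != o2 -> tact G1 h o2 o2 k = 0.
    move=> k k2; rewrite (tact_22k _ _ Hr) Hl //.
    rewrite /dot (eq_bigr (fun j => G1 o2 j * G1 k j)); last by move=> j _; rewrite Hr.
    by rewrite orth_rows // /kron eq_sym (negbTE k2).
  apply: lag_sol => //.
  - exact: d2dev_tact.
  - by rewrite S1 S2 Z.
  - by rewrite S1 S2 Z.
split; first by case: Hh => _ [].
exists G; split => // k0 Hk0.
rewrite E invmx_orth // -!tact_comp -!mulmxA orth_tr // mulmx1.
by rewrite tact_comp tact_scal tact_X.
Qed.


Lemma cont_add (n : nat) (f g : 'rV[R]_n -> R) : continuous f -> continuous g ->
  continuous (fun v => f v + g v).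
Proof. by move=> cf cg x; apply: continuousD; [apply: cf|apply: cg]. Qed.

Lemma cont_mul (n : nat) (f g : 'rV[R]_n -> R) : continuous f -> continuous g ->
  continuous (fun v => f v * g v).
Proof. by move=> cf cg x; apply: continuousM; [apply: cf|apply: cg]. Qed.

Lemma cont_opp (n : nat) (f : 'rV[R]_n -> R) : continuous f -> continuous (fun v => - f v).
Proof. by move=> cf x; apply: continuousN; apply: cf. Qed.

Lemma cont_cst (n : nat) (c : R) : continuous (fun v : 'rV[R]_n => c).
Proof. exact: cst_continuous. Qed.

Lemma cont_coord (n : nat) (i : 'I_n) : continuous (fun v : 'rV[R]_n => v ord0 i).
Proof. exact: coord_continuous. Qed.

Lemma cont_sum3 (n : nat) (F : 'I_3 -> 'rV[R]_n -> R) : (forall i, continuous (F i)) ->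
  continuous (fun v => \sum_(i < 3) F i v).
Proof.
move=> cF; have -> : (fun v => \sum_(i < 3) F i v) = (fun v => F o0 v + F o1 v + F o2 v).
  by apply: functional_extensionality => v; rewrite sum3.
by apply: cont_add; [apply: cont_add|]; apply: cF.
Qed.

Lemma cont_exp (n : nat) (f : 'rV[R]_n -> R) k : continuous f -> continuous (fun v => f v ^+ k).
Proof.
move=> cf; elim: k => [|k IH]; first by apply: cont_cst.
have -> : (fun v => f v ^+ k.+1) = (fun v => f v * f v ^+ k).
  by apply: functional_extensionality => v; rewrite exprS.
exact: cont_mul.
Qed.


Local Open Scope classical_set_scope.

Lemma rV_bounded (n : nat) (A : set 'rV[R]_n) (B : R) :
  (forall v, A v -> forall i, `|v ord0 i| <= B) -> bounded_set A.
Proof.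
move=> HB; exists (`|B|); split; first exact: num_real.
move=> x Bx v Av /=.
change (mx_norm v <= x); rewrite mx_normrE; apply: bigmax_le; first by apply: le_trans (normr_ge0 B) (ltW Bx).
move=> [i j] _ /=; rewrite (ord1 i).
apply: le_trans (HB v Av j) _; apply: le_trans (ler_norm B) (ltW Bx).
Qed.

Lemma evt_max (n : nat) (f : 'rV[R]_n -> R) (A : set 'rV[R]_n) (B : R) :
  continuous f -> closed A -> A !=set0 ->
  (forall v, A v -> forall i, `|v ord0 i| <= B) ->
  exists2 c, A c & forall v, A v -> f v <= f c.
Proof.
move=> cf cA A0 HB.
have cpt : compact A by apply: bounded_closed_compact => //; exact: rV_bounded HB.
have cfA : {within A, continuous f} by apply: continuous_subspaceT.
have [c cA' Hc] := EVT_max_rV A0 cpt cfA.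
exists c; first by rewrite -in_setE.
by move=> v Av; apply: Hc; rewrite in_setE.
Qed.

Lemma evt_min (n : nat) (f : 'rV[R]_n -> R) (A : set 'rV[R]_n) (B : R) :
  continuous f -> closed A -> A !=set0 ->
  (forall v, A v -> forall i, `|v ord0 i| <= B) ->
  exists2 c, A c & forall v, A v -> f c <= f v.
Proof.
move=> cf cA A0 HB.
have cpt : compact A by apply: bounded_closed_compact => //; exact: rV_bounded HB.
have cfA : {within A, continuous f} by apply: continuous_subspaceT.
have [c cA' Hc] := EVT_min_rV A0 cpt cfA.
exists c; first by rewrite -in_setE.
by move=> v Av; apply: Hc; rewrite in_setE.
Qed.

Lemma closed_zero (n : nat) (g : 'rV[R]_n -> R) : continuous g -> closed [set v | g v = 0].
Proof.
move=> cg; have -> : [set v | g v = 0] = g @^-1` [set x | x = 0] by [].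
by apply: preimage_closed; [move=> x _; apply: cg | apply: closed_eq].
Qed.


Definition rv (v : 'rV[R]_3) : 'I_3 -> R := fun i => v ord0 i.

Lemma rv_row (u : 'I_3 -> R) : rv (\row_i u i) = u.
Proof. by apply: functional_extensionality => i; rewrite /rv mxE. Qed.

Lemma cont_pp2 (h : tensor3 R) : continuous (fun v : 'rV[R]_3 => pp h (rv v) ^+ 2).
Proof.
apply: cont_exp; rewrite /pp /tri /rv.
apply: cont_sum3 => i; apply: cont_sum3 => j; apply: cont_sum3 => k.
apply: cont_mul; last exact: cont_coord.
apply: cont_mul; last exact: cont_coord.
apply: cont_mul; last exact: cont_coord.
exact: cont_cst.
Qed.

Lemma cont_sq : continuous (fun v : 'rV[R]_3 => sq (rv v)).
Proof.
rewrite /sq /rv; apply: cont_sum3 => i; apply: cont_exp; exact: cont_coord.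
Qed.

Lemma abs_le1 (x : R) : x ^+ 2 <= 1 -> `|x| <= 1.
Proof. move=> H; rewrite ler_norml; apply/andP; split; nra. Qed.

Lemma SMax_all (h : tensor3 R) : SMax h.
Proof.
pose A := [set v : 'rV[R]_3 | sq (rv v) - 1 = 0].
have cA : closed A.
  apply: closed_zero; apply: cont_add; [exact: cont_sq | exact: cont_cst].
have A0 : A !=set0.
  exists (\row_i v3 1 0 0 i); rewrite /A /= rv_row sq_v3; ring.
have HB : forall v, A v -> forall i, `|v ord0 i| <= 1.
  move=> v; rewrite /A /= /sq /rv sum3 => Av i; apply: abs_le1.
  have := sqr_ge0 (v ord0 o0); have := sqr_ge0 (v ord0 o1); have := sqr_ge0 (v ord0 o2).
  by case: (ord3P i) => [->|[->|->]]; lra.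
have [c Ac Hc] := evt_max (@cont_pp2 h) cA A0 HB.
exists (rv c); split; first by move: Ac; rewrite /A /=; lra.
move=> u Hu; have := Hc (\row_i u i); rewrite rv_row; apply.
by rewrite /A /= rv_row Hu subrr.
Qed.

Lemma CMax_all (h : tensor3 R) : CMax h.
Proof.
pose A := [set v : 'rV[R]_3 | rv v o0 ^+ 2 + rv v o1 ^+ 2 - 1 = 0] `&`
          [set v : 'rV[R]_3 | rv v o2 = 0].
have cA : closed A.
  apply: closedI; apply: closed_zero; last exact: cont_coord.
  apply: cont_add; last exact: cont_cst.
  by apply: cont_add; apply: cont_exp; exact: cont_coord.
have A0 : A !=set0.
  exists (\row_i v3 1 0 0 i); rewrite /A /= rv_row /v3 /=; split => //; ring.
have HB : forall v, A v -> forall i, `|v ord0 i| <= 1.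
  move=> v; rewrite /A /= /rv => -[Av1 Av2] i; apply: abs_le1.
  have := sqr_ge0 (v ord0 o0); have := sqr_ge0 (v ord0 o1).
  case: (ord3P i) => [->|[->|->]]; try lra.
  by rewrite Av2; lra.
have [c [Ac1 Ac2] Hc] := evt_max (@cont_pp2 h) cA A0 HB.
rewrite /= in Ac1 Ac2.
exists (rv c o0), (rv c o1); split; first by lra.
move=> a' b' Hab; have := Hc (\row_i v3 a' b' 0 i); rewrite rv_row.
have Ec : v3 (rv c o0) (rv c o1) 0 = rv c by rewrite -Ac2 -v3E.
rewrite Ec; apply.
by rewrite /A /= rv_row /v3 /=; split => //; lra.
Qed.


Definition mk7 (v : 'rV[R]_7) : tensor3 R :=
  mkH (v ord0 (inord 0)) (v ord0 (inord 1)) (v ord0 (inord 2)) (v ord0 (inord 3))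
      (v ord0 (inord 4)) (v ord0 (inord 5)) (v ord0 (inord 6)).

Lemma cont_mk7 i j k : continuous (fun v => mk7 v i j k).
Proof.
rewrite /mk7 /mkH.
case: (ord3P i) => [->|[->|->]]; case: (ord3P j) => [->|[->|->]];
case: (ord3P k) => [->|[->|->]]; rewrite /=;
  first [ exact: cont_coord
        | by apply: cont_add; apply: cont_opp; exact: cont_coord ].
Qed.

Lemma cont_tnorm2 (h0 : tensor3 R) : continuous (fun v => tnorm2 (tsub h0 (mk7 v))).
Proof.
rewrite /tnorm2 /tsub; apply: cont_sum3 => i; apply: cont_sum3 => j; apply: cont_sum3 => k.
apply: cont_exp; apply: cont_add; [exact: cont_cst | apply: cont_opp; exact: cont_mk7].
Qed.

Lemma cont_tnorm2' : continuous (fun v => tnorm2 (mk7 v)).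
Proof.
rewrite /tnorm2; apply: cont_sum3 => i; apply: cont_sum3 => j; apply: cont_sum3 => k.
apply: cont_exp; exact: cont_mk7.
Qed.

Lemma cont_d2 i j : continuous (fun v => d2 (mk7 v) i j).
Proof.
rewrite /d2; apply: cont_sum3 => k; apply: cont_sum3 => l.
by apply: cont_mul; exact: cont_mk7.
Qed.

Definition Dsum (h : tensor3 R) := \sum_(i < 3) \sum_(j < 3) d2dev h i j ^+ 2.

Lemma cont_D : continuous (fun v => Dsum (mk7 v)).
Proof.
rewrite /Dsum; apply: cont_sum3 => i; apply: cont_sum3 => j; apply: cont_exp.
rewrite /d2dev; apply: cont_add; first exact: cont_d2.
apply: cont_opp; apply: cont_mul; last exact: cont_cst.
apply: cont_mul; last exact: cont_cst.
apply: cont_sum3 => k; exact: cont_d2.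
Qed.

Lemma Dsum0 h : Dsum h = 0 -> d2dev_zero h.
Proof.
move=> H i j.
have P : forall i, true -> 0 <= \sum_(j < 3) d2dev h i j ^+ 2.
  by move=> i' _; apply: sumr_ge0 => j' _; apply: sqr_ge0.
have H1 := @psumr_eq0P _ _ _ _ P H i isT.
have H2 := @psumr_eq0P _ _ _ _ (fun j' _ => sqr_ge0 (d2dev h i j')) H1 j isT.
by move/eqP: H2; rewrite sqrf_eq0 => /eqP.
Qed.

Lemma le_sum3 (F : 'I_3 -> R) i : (forall j, 0 <= F j) -> F i <= \sum_(j < 3) F j.
Proof.
move=> H; rewrite sum3; have := H o0; have := H o1; have := H o2.
by case: (ord3P i) => [->|[->|->]]; lra.
Qed.

Lemma comp_le_tnorm2 (t : tensor3 R) i j k : t i j k ^+ 2 <= tnorm2 t.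
Proof.
rewrite /tnorm2.
have H1 := @le_sum3 (fun k' => t i j k' ^+ 2) k (fun _ => sqr_ge0 _).
have H2 := @le_sum3 (fun j' => \sum_(k' < 3) t i j' k' ^+ 2) j
   (fun _ => sumr_ge0 _ (fun _ _ => sqr_ge0 _)).
have H3 := @le_sum3 (fun i' => \sum_(j' < 3) \sum_(k' < 3) t i' j' k' ^+ 2) i
   (fun _ => sumr_ge0 _ (fun _ _ => sumr_ge0 _ (fun _ _ => sqr_ge0 _))).
exact: le_trans H1 (le_trans H2 H3).
Qed.

Lemma tnorm2_ge0 (t : tensor3 R) : 0 <= tnorm2 t.
Proof. by apply: sumr_ge0 => i _; apply: sumr_ge0 => j _; apply: sumr_ge0 => k _; apply: sqr_ge0. Qed.

Lemma tnorm2_lower (a b : tensor3 R) : tnorm2 b / 2%:R - tnorm2 a <= tnorm2 (tsub a b).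
Proof.
rewrite /tnorm2 /tsub mulr_suml -sumrB; apply: ler_sum => i _.
rewrite mulr_suml -sumrB; apply: ler_sum => j _.
rewrite mulr_suml -sumrB; apply: ler_sum => k _.
have := sqr_ge0 (a i j k - b i j k / 2%:R); nra.
Qed.

Lemma T_min (h0 : tensor3 R) :
  exists h, is_minimizer (fun h => is_harm3 h /\ d2dev_zero h) h0 h.
Proof.
set B := 4%:R * tnorm2 h0.
have B0 : 0 <= B by rewrite mulr_ge0 ?ler0n ?tnorm2_ge0.
pose A := [set v : 'rV[R]_7 | Dsum (mk7 v) = 0] `&` [set v | tnorm2 (mk7 v) - B <= 0].
have cA : closed A.
  apply: closedI; first by apply: closed_zero; exact: cont_D.
  have -> : [set v | tnorm2 (mk7 v) - B <= 0] =
     (fun v => tnorm2 (mk7 v) - B) @^-1` [set x | x <= 0] by [].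
  apply: preimage_closed; last exact: closed_le.
  move=> x _; apply: cont_add; [exact: cont_tnorm2' | exact: cont_cst].
have mk70 : mk7 0 = mkH 0 0 0 0 0 0 0 by rewrite /mk7 !mxE.
have z0 : forall i j k : 'I_3, mkH (0:R) 0 0 0 0 0 0 i j k = 0.
  move=> i j k; case: (ord3P i) => [->|[->|->]]; case: (ord3P j) => [->|[->|->]];
  case: (ord3P k) => [->|[->|->]]; rewrite /mkH /=; ring.
have A0 : A 0.
  split; rewrite /= mk70.
    have D0 : d2dev_zero (mkH (0:R) 0 0 0 0 0 0) by rewrite mkH0 tact_id; exact: scalX_d2.
    by rewrite /Dsum big1 // => i _; rewrite big1 // => j _; rewrite D0 expr2 mulr0.
  rewrite /tnorm2 big1 ?sub0r ?oppr_le0 // => i _; rewrite big1 // => j _;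
  rewrite big1 // => k _; by rewrite z0 expr2 mulr0.
have HB : forall v, A v -> forall i, `|v ord0 i| <= B + 1.
  move=> v [_ Av] i /=; rewrite /= in Av.
  have Ci : exists i1 j1 k1, mk7 v i1 j1 k1 = v ord0 i.
    have -> : i = inord (val i) by rewrite inord_val.
    case: i => [[|[|[|[|[|[|[|n]]]]]]] Hi] //=.
    - by exists o0, o0, o0.
    - by exists o0, o0, o1.
    - by exists o0, o0, o2.
    - by exists o0, o1, o1.
    - by exists o0, o1, o2.
    - by exists o1, o1, o1.
    - by exists o1, o1, o2.
  have [i1 [j1 [k1 <-]]] := Ci.
  have := comp_le_tnorm2 (mk7 v) i1 j1 k1.
  set x := mk7 v i1 j1 k1 => Hx.
  have Hx' : x ^+ 2 <= B by lra.
  rewrite ler_norml; apply/andP; split; nra.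
have [c Ac Hc] := evt_min (@cont_tnorm2 h0) cA (ex_intro _ 0 A0) HB.
exists (mk7 c); split.
  by split; [exact: mkH_harm | apply: Dsum0; case: Ac].
move=> y [Hy Dy].
set vy := \row_(i < 7) (nth 0 [:: y o0 o0 o0; y o0 o0 o1; y o0 o0 o2; y o0 o1 o1;
   y o0 o1 o2; y o1 o1 o1; y o1 o1 o2] i).
have Ey : mk7 vy = y.
  by rewrite /mk7 /vy !mxE !inordK //= -harm_mkH.
case: (lerP (tnorm2 y) B) => yB.
  rewrite -Ey; apply: Hc; split; rewrite /= Ey.
    rewrite /Dsum big1 // => i _; rewrite big1 // => j _; by rewrite Dy expr2 mulr0.
  by rewrite subr_le0.
apply: le_trans (Hc 0 A0) _.
rewrite mk70.
have -> : tnorm2 (tsub h0 (mkH 0 0 0 0 0 0 0)) = tnorm2 h0.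
  by rewrite /tnorm2 /tsub; apply: eq_bigr => i _; apply: eq_bigr => j _;
    apply: eq_bigr => k _; rewrite z0 subr0.
apply: le_trans (tnorm2_lower h0 y).
have := tnorm2_ge0 h0; rewrite /B in yB; lra.
Qed.


Lemma harm_sub (a b : tensor3 R) : is_harm3 a -> is_harm3 b -> is_harm3 (tsub a b).
Proof.
move=> [A1 [A2 A3]] [B1 [B2 B3]]; rewrite /tsub; split; [|split].
- by move=> i j k; rewrite A1 B1.
- by move=> i j k; rewrite A2 B2.
- by move=> i; rewrite sumrB A3 B3 subrr.
Qed.

Lemma pyth (e0 h : tensor3 R) : is_piez e0 -> is_harm3 h ->
  tnorm2 (tsub e0 h) = tnorm2 (tsub e0 (harm_part e0)) + tnorm2 (tsub (harm_part e0) h).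
Proof.
move=> Hp Hh; rewrite (tnorm2_split _ (harm_part e0)) harm_part_orth ?mulr0 ?addr0 //.
by apply: harm_sub => //; exact: harm_part_harm.
Qed.

Lemma ST_iff (e : tensor3 R) : in_closed_stratum_Ominus e <-> (is_harm3 e /\ d2dev_zero e).
Proof.
split; first exact: S_T.
by move=> [H1 H2]; apply: T_S => //; [exact: SMax_all | exact: CMax_all].
Qed.

End Main.


Theorem theorem7p2 (R : realType) (e0 : tensor3 R) :
  is_piez e0 ->
  let h0 := harm_part e0 in
  let g0 := tsub e0 h0 in
  let S := @in_closed_stratum_Ominus R in
  let T := fun h => is_harm3 h /\ d2dev_zero h in
  (exists e, is_minimizer S e0 e) /\
  (exists h, is_minimizer T h0 h) /\
  (forall e h, is_minimizer S e0 e -> is_minimizer T h0 h ->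
     tnorm2 (tsub e0 e) = tnorm2 g0 + tnorm2 (tsub h0 h)) /\
  (forall e, is_minimizer S e0 e <-> is_minimizer T h0 e).
Proof.
move=> Hp h0 g0 S T.
have EQ : forall e, is_minimizer S e0 e <-> is_minimizer T h0 e.
  move=> e; split.
  - move=> [Se Hm]; have Te := (ST_iff e).1 Se; split => // y Ty.
    have := Hm y ((ST_iff y).2 Ty).
    by rewrite (pyth Hp Te.1) (pyth Hp Ty.1) lerD2l.
  - move=> [Te Hm]; split; first exact: (ST_iff e).2.
    move=> y Sy; have Ty := (ST_iff y).1 Sy.
    by rewrite (pyth Hp Te.1) (pyth Hp Ty.1) lerD2l; apply: Hm.
have [h Hh] := T_min h0.
split; first by exists h; apply/EQ.
split; first by exists h.
split => // e h' He Hh'.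
have [[Te1 Te2] Hme] := (EQ e).1 He.
rewrite (pyth Hp Te1); congr (_ + _).
have [Th' Hmh'] := Hh'.
apply: le_anti; apply/andP; split; [apply: Hme | apply: Hmh'] => //.
Qed.
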